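(* In the sleeping multi-armed bandit setting, let $(\ell_t)_{t\ge1}$ be i.i.d. random loss vectors in $[0,1]^K$ with mean vector $\mu$, where for each $t$, $\ell_t$ is independent of everything determined before the learner observes $\ell_t(k_t)$ at round $t$ (including $S_1,\dots,S_t$ and $k_1,\dots,k_t$), and let $(S_t)_{t\ge1}$ be any sequence of availability sets such that $S_t$ may depend only on $(\ell_s)_{s\le t-1}$ (and past play). Then for any algorithm, $$\max_{1\le i,j\le K}\mathbb E\big[R_T^{\mathrm{int}}(i\to j)\big]\le\max_{\sigma}\mathbb E\big[R_T^{\mathrm{ordering}}(\sigma)\big],$$ the maximum on the right being over all orderings $\sigma$ of $[K]$.
   Context: Sleeping multi-armed bandit setting: $K$ arms $[K]$. At each round $t$ a nonempty availability set $S_t\subseteq[K]$ is revealed, the learner (possibly randomized, using only $S_1,\dots,S_t$, previously observed losses and internal randomness) selects $k_t\in S_t$ and observes $\ell_t(k_t)$. Internal sleeping regret: $R_T^{\mathrm{int}}(i\to j)=\sum_{t=1}^T\big(\ell_t(k_t)-\ell_t(j)\big)\mathbf 1\{k_t=i,\ j\in S_t\}$. An ordering is a permutation $\sigma=(\sigma_1,\dots,\sigma_K)$ of $[K]$; for nonempty $S\subseteq[K]$, $\sigma(S)=\sigma_m$ with $m=\min\{i:\sigma_i\in S\}$. Ordering regret: $R_T^{\mathrm{ordering}}(\sigma)=\sum_{t=1}^T\big(\ell_t(k_t)-\ell_t(\sigma(S_t))\big)$. *)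

(* Defs.v *)
From HB Require Import structures.
From mathcomp Require Import all_boot all_order all_algebra.
From mathcomp Require Import all_classical all_reals all_analysis.
From mathcomp Require Import perm.
Set Implicit Arguments. Unset Strict Implicit. Unset Printing Implicit Defensive.
Import Order.TTheory GRing.Theory Num.Theory.
Local Open Scope classical_set_scope.
Local Open Scope ring_scope.

(* An ordering is a permutation sigma of 'I_K, read as the
   list (sigma 0, ..., sigma (K-1)).  [ordering_sel sigma S] is sigma_m for the
   least position m with sigma_m \in S (None iff S is empty). *)
Definition ordering_sel (K : nat) (sigma : {perm 'I_K}) (S : {set 'I_K})
  : option 'I_K :=
  omap sigma [pick m : 'I_K | (sigma m \in S) &&
                 [forall m' : 'I_K, (sigma m' \in S) ==> (m <= m')%N]].

(* Rounds are indexed t = 0, ..., T-1 (the paper's rounds 1..T).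
   l t a x : loss of arm a at round t, k t x : chosen arm, S t x : available set,
   on sample point x. *)
Definition int_regret {R : realType} {Om : Type} (K : nat)
  (l : nat -> 'I_K -> Om -> R) (k : nat -> Om -> 'I_K)
  (S : nat -> Om -> {set 'I_K}) (T : nat) (i j : 'I_K) (x : Om) : R :=
  \sum_(t < T) (l t (k t x) x - l t j x) *
               ((k t x == i) && (j \in S t x))%:R.

Definition ordering_regret {R : realType} {Om : Type} (K : nat)
  (l : nat -> 'I_K -> Om -> R) (k : nat -> Om -> 'I_K)
  (S : nat -> Om -> {set 'I_K}) (T : nat) (sigma : {perm 'I_K}) (x : Om) : R :=
  \sum_(t < T) (l t (k t x) x -
     match ordering_sel sigma (S t x) with Some a => l t a x | None => 0 end).

(* the event {forall a, l t a \in B a} : a generic "rectangle" event of the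
   random vector l t; such events form a pi-system generating sigma(l t). *)
Definition rect_event {R : realType} {Om : Type} (K : nat)
  (l : nat -> 'I_K -> Om -> R) (t : nat) (B : 'I_K -> set R) : set Om :=
  [set x | forall a, B a (l t a x)].

(* Main.v *)
Require Import Defs.
From HB Require Import structures.
From mathcomp Require Import all_boot all_order all_algebra.
From mathcomp Require Import all_classical all_reals all_analysis.
From mathcomp Require Import perm.
From mathcomp Require Import measurable_realfun.
Set Implicit Arguments. Unset Strict Implicit. Unset Printing Implicit Defensive.
Import Order.TTheory GRing.Theory Num.Theory.
Local Open Scope classical_set_scope.
Local Open Scope ring_scope.
Import HBNNSimple.

Section key.
Local Open Scope ereal_scope.
Context (R : realType) d (Om : measurableType d).

Lemma int_simple_comp (m : {measure set Om -> \bar R}) (D : set Om) (mD : measurable D)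
  (g : {nnsfun R >-> R}) (f : Om -> R) (mf : measurable_fun setT f) :
  \int[m]_(x in D) (g (f x))%:E =
  \sum_(r \in range g) r%:E * m (f @^-1` (g @^-1` [set r]) `&` D).
Proof.
have mB r : measurable (f @^-1` (g @^-1` [set r])).
  by rewrite -(setTI (f @^-1` _)); apply: mf => //; exact: measurable_sfunP.
under eq_integral do rewrite fimfunE -fsumEFin//.
rewrite ge0_integral_fsum//; last 2 first.
- move=> r; apply/measurable_EFinP; apply: measurable_funM => //.
  apply: measurableT_comp => //; exact: measurable_funTS.
- by move=> r x _; rewrite nnfun_muleindic_ge0.
apply: eq_fsbigr => r _.
rewrite (eq_integral (fun x => (r * \1_(f @^-1` (g @^-1` [set r])) x)%:E)); last first.
  by move=> x _; rewrite !indicE.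
rewrite (integralZl_indic mD (fun r => f @^-1` (g @^-1` [set r])))//.
- by rewrite integral_indic.
- by move=> r0; rewrite preimage_nnfun0// preimage_set0.
Qed.

Lemma int_lim (m : {measure set Om -> \bar R}) (D : set Om) (mD : measurable D)
  (f : Om -> R) (mf : measurable_fun setT f) (f0 : forall x, (0 <= f x)%R) :
  \int[m]_(x in D) (f x)%:E =
  limn (fun n => \int[m]_(x in D)
     ((nnsfun_approx measurableT (measurableT_comp (@EFin_measurable R setT)
        (@normr_measurable R setT)) n) (f x))%:E).
Proof.
set fn := nnsfun_approx _ _.
rewrite -monotone_convergence//.
- apply: eq_integral => x _; apply/esym/cvg_lim => //.
  have := @cvg_nnsfun_approx _ _ _ setT measurableT _
     (measurableT_comp (@EFin_measurable R setT) (@normr_measurable R setT)) _ (f x) I.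
  rewrite /= ger0_norm//; apply => y _; rewrite lee_fin.
  done.
- move=> n; apply/measurable_EFinP; apply: measurableT_comp => //.
  exact: measurable_funTS.
- by move=> n x _; rewrite lee_fin.
- by move=> x _ a b ab; rewrite lee_fin; exact/lefP/nd_nnsfun_approx.
Qed.

Lemma indep_int (P : probability Om R) (f : Om -> R) (A : set Om)
  (mA : measurable A) (mf : measurable_fun setT f) (f0 : forall x, (0 <= f x)%R)
  (hi : forall B, measurable B -> P (A `&` f @^-1` B) = P A * P (f @^-1` B)) :
  \int[P]_(x in A) (f x)%:E = P A * \int[P]_x (f x)%:E.
Proof.
have PA0 : (0 <= fine (P A))%R by rewrite fine_ge0.
pose c : {nonneg R} := NngNum PA0.
have PAc : P A = c%:num%:E by rewrite /= fineK// fin_num_measure.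
rewrite PAc -ge0_integral_mscale//; last first.
  by move=> x _; rewrite lee_fin.
  exact/measurable_EFinP.
rewrite (int_lim _ mA mf f0) (int_lim _ measurableT mf f0).
congr (limn _); apply/funext => n.
rewrite !int_simple_comp//; apply: eq_fsbigr => r _; congr (_ * _).
rewrite /mscale /= setIT setIC hi// PAc//.
Qed.
End key.

Section BMsec.
Context (R : realType) d (Om : measurableType d) (P : probability Om R).
Local Open Scope ereal_scope.

Definition BM (f : Om -> R) :=
  measurable_fun setT f /\ exists M : R, forall x, (`|f x| <= M)%R.

Lemma BM_int f : BM f -> P.-integrable setT (EFin \o f).
Proof.
case=> mf [M hM].
apply: (@le_integrable _ _ _ P setT measurableT _ (EFin \o cst `|M|%R)).
- exact/measurable_EFinP.
- move=> x _ /=; rewrite !normr_id lee_fin; apply: le_trans (hM x) _.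
  exact: ler_norm.
- exact: finite_measure_integrable_cst.
Qed.

Lemma BM_D f g : BM f -> BM g -> BM (fun x => f x + g x)%R.
Proof.
case=> mf [M hM] [mg [N hN]]; split; first exact: measurable_funD.
exists (M + N)%R => x; apply: le_trans (ler_normD _ _) _; exact: lerD.
Qed.

Lemma BM_N f : BM f -> BM (fun x => - f x)%R.
Proof.
case=> mf [M hM]; split; first exact: measurable_funN.
by exists M => x; rewrite normrN.
Qed.

Lemma BM_B f g : BM f -> BM g -> BM (fun x => f x - g x)%R.
Proof. by move=> hf hg; apply: BM_D => //; exact: BM_N. Qed.

Lemma BM_M f g : BM f -> BM g -> BM (fun x => f x * g x)%R.
Proof.
case=> mf [M hM] [mg [N hN]]; split; first exact: measurable_funM.
exists (`|M| * `|N|)%R => x; rewrite normrM.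
apply: ler_pM => //; apply: le_trans (ler_norm _); [exact: hM|exact: hN].
Qed.

Lemma BM_cst (c : R) : BM (fun _ => c).
Proof. by split; [exact: measurable_cst|exists `|c|%R]. Qed.

Lemma BM_indic (A : set Om) : measurable A -> BM (fun x => \1_A x)%R.
Proof.
move=> mA; split; first exact: measurable_indic.
by exists 1%R => x; rewrite indicE; case: (_ \in _); rewrite ?normr1 ?normr0.
Qed.

Lemma BM_sum (I : Type) (s : seq I) (F : I -> Om -> R) :
  (forall i, BM (F i)) -> BM (fun x => \sum_(i <- s) F i x)%R.
Proof.
move=> hF; elim: s => [|i s IH].
  by under eq_fun do rewrite big_nil; exact: BM_cst.
under eq_fun do rewrite big_cons; exact: BM_D.
Qed.

Lemma int_sum (I : Type) (s : seq I) (F : I -> Om -> R) :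
  (forall i, BM (F i)) ->
  \int[P]_x ((\sum_(i <- s) F i x)%R)%:E = \sum_(i <- s) \int[P]_x (F i x)%:E.
Proof.
move=> hF; rewrite (eq_integral (fun x => \sum_(i <- s) (F i x)%:E)); last by move=> x _; rewrite sumEFin.
by apply: integral_sum => // i; exact: BM_int.
Qed.

Lemma int_B f g : BM f -> BM g ->
  \int[P]_x (f x - g x)%:E = \int[P]_x (f x)%:E - \int[P]_x (g x)%:E.
Proof.
move=> hf hg; under eq_integral do rewrite EFinB.
by apply: integralB_EFin => //; exact: BM_int.
Qed.
End BMsec.


Lemma sel_spec K (sg : {perm 'I_K}) (A : {set 'I_K}) b : b \in A ->
  exists a, [/\ ordering_sel sg A = Some a, a \in A &
    forall c, c \in A -> ((sg^-1)%g a <= (sg^-1)%g c)%N].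
Proof.
move=> hb; rewrite /ordering_sel; case: pickP => [m /andP[hm /forallP hall]|hnone].
  exists (sg m); split => // c hc; rewrite permK.
  by move: (hall ((sg^-1)%g c)); rewrite permKV hc => /implyP; apply.
exfalso.
have hP : sg ((sg^-1)%g b) \in A by rewrite permKV.
case: (@arg_minnP _ _ (fun m => sg m \in A) (fun m => nat_of_ord m) hP) => m hm hmin.
have := hnone m; rewrite hm /= => /negP; apply; apply/forallP => m'.
by apply/implyP => h; exact: hmin.
Qed.

Lemma sorted_perm (R : realType) K (mu : 'I_K -> R) (i0 : 'I_K) :
  exists sg : {perm 'I_K}, forall p q : 'I_K, (p <= q)%N -> (mu (sg p) <= mu (sg q))%R.
Proof.
pose le := [rel a b : 'I_K | (mu a <= mu b)%R].
pose s := sort le (enum 'I_K).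
have ss : size s = K by rewrite size_sort size_enum_ord.
have us : uniq s by rewrite sort_uniq enum_uniq.
have inj : injective (fun m : 'I_K => nth i0 s m).
  by move=> p q /eqP; rewrite nth_uniq ?ss// => /eqP/val_inj.
exists (perm inj) => p q pq; rewrite !permE.
apply: (sorted_leq_nth (leT:=le)) => //.
- by move=> b a c /= h1 h2; exact: le_trans h1 h2.
- by move=> a /=.
- by apply: sort_sorted => a b; exact: le_total.
- by rewrite inE ss.
- by rewrite inE ss.
Qed.

Section main.
Context (R : realType) (d : measure_display) (Om : measurableType d)
  (P : probability Om R) (K : nat) (T : nat) (mu : 'I_K -> R)
  (l : nat -> 'I_K -> Om -> R) (k : nat -> Om -> 'I_K)
  (S : nat -> Om -> {set 'I_K}) (G : nat -> set (set Om)).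
Hypotheses
  (hl01 : forall t a x, 0 <= l t a x <= 1)
  (hlmeas : forall t a, measurable_fun setT (l t a))
  (hmean : forall t a, (\int[P]_x (l t a x)%:E = (mu a)%:E)%E)
  (hGsig : forall t, sigma_algebra setT (G t))
  (hGsub : forall t, G t `<=` measurable)
  (hGk : forall t s i, (s <= t)%N -> G t (k s @^-1` [set i]))
  (hGS : forall t s (A : {set 'I_K}), (s <= t)%N -> G t (S s @^-1` [set A]))
  (hind : forall t (A : set Om) (B : 'I_K -> set R), G t A ->
     (forall a, measurable (B a)) ->
     P (A `&` rect_event l t B) = (P A * P (rect_event l t B))%E)
  (hkS : forall t x, k t x \in S t x).

Lemma G0 t : G t set0. Proof. by case: (hGsig t). Qed.
Lemma GC t A : G t A -> G t (~` A).
Proof. by case: (hGsig t) => _ hc _ /hc; rewrite setTD. Qed.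
Lemma GT t : G t setT. Proof. by rewrite -setC0; apply: GC; exact: G0. Qed.
Lemma GU t A B : G t A -> G t B -> G t (A `|` B).
Proof.
move=> hA hB.
have -> : A `|` B = \bigcup_n (if n is 0 then A else B).
  apply/seteqP; split => x.
    by case=> h; [exists 0%N|exists 1%N].
  by case=> -[|n] _ /= h; [left|right].
by case: (hGsig t) => _ _; apply => -[|n].
Qed.
Lemma GI t A B : G t A -> G t B -> G t (A `&` B).
Proof.
by move=> hA hB; rewrite -[A]setCK -[B]setCK -setCU; apply/GC/GU; apply: GC.
Qed.

Lemma GQ t (Q : pred ('I_K * {set 'I_K})) : G t [set x | Q (k t x, S t x)].
Proof.
have hf p : G t [set x | (k t x, S t x) == p].
  have -> : [set x | (k t x, S t x) == p] =
     k t @^-1` [set p.1] `&` S t @^-1` [set p.2].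
    apply/seteqP; split => x /=.
      by case: p => a B /eqP[-> ->].
    by case: p => a B /= [-> ->].
  by apply: GI; [exact: hGk|exact: hGS].
have hs (s : seq ('I_K * {set 'I_K})) : G t [set x | (k t x, S t x) \in s].
  elim: s => [|p s IH].
    have -> : [set x | (k t x, S t x) \in [::]] = set0 by apply/seteqP; split => x.
    exact: G0.
  have -> : [set x | (k t x, S t x) \in p :: s] =
     [set x | (k t x, S t x) == p] `|` [set x | (k t x, S t x) \in s].
    by apply/seteqP; split => x /=; rewrite in_cons => /orP.
  exact: GU.
have -> : [set x | Q (k t x, S t x)] =
   [set x | (k t x, S t x) \in seq.filter Q (enum [set: ('I_K * {set 'I_K})%type])].
  by apply/seteqP; split => x /=; rewrite mem_filter mem_enum in_setT andbT.
exact: hs.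
Qed.


Lemma Gm t A : G t A -> measurable A. Proof. exact: hGsub. Qed.

Lemma BM_l t a : BM (l t a).
Proof.
split; first exact: hlmeas.
by exists 1 => x; have /andP[h0 h1] := hl01 t a x; rewrite ger0_norm.
Qed.

Lemma fib_split (g : Om -> 'I_K) (F : 'I_K -> R) (A : set Om) x :
  F (g x) * \1_A x = \sum_a F a * \1_(A `&` g @^-1` [set a]) x.
Proof.
rewrite (bigD1 (g x)) //= big1 ?addr0.
  rewrite !indicE; case: (boolP (x \in A)) => hx.
    by rewrite mem_set//; split => //; exact: set_mem.
  by rewrite memNset// => -[/mem_set]; rewrite (negbTE hx).
move=> a ha; rewrite indicE; case: (boolP (x \in _)) => [/set_mem[_ /= h]|].
  by move: ha; rewrite h eqxx.
by rewrite mulr0.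
Qed.

Lemma int_cst_indic (c : R) A : measurable A ->
  (\int[P]_x (c * \1_A x)%:E = c%:E * P A)%E.
Proof.
move=> mA; under eq_integral do rewrite EFinM.
rewrite integralZl//; last exact: integrable_indic.
by rewrite integral_indic// setIT.
Qed.

Lemma core1 t a A : G t A ->
  (\int[P]_x (l t a x * \1_A x)%:E = \int[P]_x (mu a * \1_A x)%:E)%E.
Proof.
move=> hA; have mA := Gm hA.
rewrite int_cst_indic//.
transitivity (\int[P]_(x in A) (l t a x)%:E)%E.
  rewrite [RHS]integral_mkcond; apply: eq_integral => x _.
  by rewrite /patch indicE; case: ifP => _; rewrite ?mulr1 ?mulr0.
rewrite indep_int//.
- by rewrite hmean muleC.
- by move=> x; case/andP: (hl01 t a x).
move=> B mB.
have hr : rect_event l t (fun b => if b == a then B else setT) = l t a @^-1` B.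
  apply/seteqP; split => x /=.
    by move/(_ a); rewrite eqxx.
  by move=> h b; case: eqP => [->|].
rewrite -hr; apply: hind => // b; case: eqP => //.
Qed.

Lemma BM_fib (g : Om -> 'I_K) (F : 'I_K -> Om -> R) :
  (forall a, measurable (g @^-1` [set a])) -> (forall a, BM (F a)) ->
  BM (fun x => F (g x) x).
Proof.
move=> hg hF.
have -> : (fun x => F (g x) x) =
   (fun x => \sum_a F a x * \1_(setT `&` g @^-1` [set a]) x).
  apply/funext => x; rewrite (bigD1 (g x)) //= big1 ?addr0.
    by rewrite indicE mem_set ?mulr1.
  move=> a ha; rewrite indicE; case: (boolP (x \in _)) => [/set_mem[_ /= h]|].
    by move: ha; rewrite h eqxx.
  by rewrite mulr0.
apply: BM_sum => a; apply: BM_M => //; apply: BM_indic.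
by rewrite setTI.
Qed.

Lemma core_g t (g : Om -> 'I_K) A :
  (forall a, G t (g @^-1` [set a])) -> G t A ->
  (\int[P]_x (l t (g x) x * \1_A x)%:E = \int[P]_x (mu (g x) * \1_A x)%:E)%E.
Proof.
move=> hg hA.
have hGa a : G t (A `&` g @^-1` [set a]) by apply: GI.
under eq_integral do rewrite (fib_split g (l t ^~ _)).
under [RHS]eq_integral do rewrite (fib_split g mu).
rewrite !int_sum; last 2 first.
- by move=> a; apply: BM_M; [exact: BM_cst|exact/BM_indic/Gm].
- by move=> a; apply: BM_M; [exact: BM_l|exact/BM_indic/Gm].
by apply: eq_bigr => a _; exact: core1.
Qed.


Lemma int_le_ord i j (sg : {perm 'I_K})
  (hs : forall p q : 'I_K, (p <= q)%N -> mu (sg p) <= mu (sg q)) :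
  (\int[P]_x (int_regret l k S T i j x)%:E <=
   \int[P]_x (ordering_regret l k S T sg x)%:E)%E.
Proof.
pose At t := [set x | (k t x == i) && (j \in S t x)].
have hAt t : G t (At t) := GQ t (fun p => (p.1 == i) && (j \in p.2)).
pose sel t x := odflt (k t x) (ordering_sel sg (S t x)).
have hsel t a : G t (sel t @^-1` [set a]).
  have := GQ t (fun p => odflt p.1 (ordering_sel sg p.2) == a).
  congr (G t _); apply/seteqP; split => x /=; [move/eqP|move=> h; apply/eqP] => //.
have hk t a : G t (k t @^-1` [set a]) by apply: hGk.
have ereg x : int_regret l k S T i j x =
   \sum_(t < T) (l t i x * \1_(At t) x - l t j x * \1_(At t) x).
  apply: eq_bigr => t _; rewrite indicE.
  case hb: ((k t x == i) && (j \in S t x)).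
    rewrite mem_set ?hb //; case/andP: hb => /eqP -> _.
    by rewrite mulrBl.
  rewrite memNset /=; first by rewrite !mulr0 subr0.
  by rewrite /At /= hb.
have ereg' x : ordering_regret l k S T sg x =
   \sum_(t < T) (l t (k t x) x * \1_setT x - l t (sel t x) x * \1_setT x).
  apply: eq_bigr => t _; rewrite indicT /= !mulr1.
  by have [a [ha _ _]] := sel_spec sg (hkS t x); rewrite /sel ha.
under eq_integral => x _ do rewrite ereg.
under [X in (_ <= X)%E]eq_integral => x _ do rewrite ereg'.
rewrite !int_sum => [|t|t]; first last.
- by apply: BM_B; apply: BM_M; [exact: BM_l|exact/BM_indic/Gm/hAt|exact: BM_l|exact/BM_indic/Gm/hAt].
- apply: BM_B; apply: BM_M; try exact: BM_indic.
  + by apply: BM_fib; [move=> a; exact/Gm/hk|move=> a; exact: BM_l].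
  + by apply: BM_fib; [move=> a; exact/Gm/hsel|move=> a; exact: BM_l].
apply: lee_sum => t _.
have mA := Gm (hAt t).
have BA (c : R) : BM (fun x => c * \1_(At t) x) by apply: BM_M; [exact: BM_cst|exact: BM_indic].
have BT (F : 'I_K -> R) (g : Om -> 'I_K) : (forall a, G t (g @^-1` [set a])) ->
    BM (fun x => F (g x) * \1_setT x).
  move=> hg; apply: BM_M; last exact: BM_indic.
  by apply: (BM_fib (F := fun a _ => F a)) => [a|a]; [exact/Gm/hg|exact: BM_cst].
have BTl (g : Om -> 'I_K) : (forall a, G t (g @^-1` [set a])) ->
    BM (fun x => l t (g x) x * \1_setT x).
  move=> hg; apply: BM_M; last exact: BM_indic.
  by apply: BM_fib => [a|a]; [exact/Gm/hg|exact: BM_l].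
have BAl a : BM (fun x => l t a x * \1_(At t) x).
  by apply: BM_M; [exact: BM_l|exact: BM_indic].
rewrite (int_B P (BAl i) (BAl j)) (core1 _ (hAt t)) (core1 _ (hAt t)).
rewrite -(int_B P (BA (mu i)) (BA (mu j))).
rewrite (int_B P (BTl _ (hk t)) (BTl _ (hsel t))).
rewrite (core_g (hk t) (GT t)) (core_g (hsel t) (GT t)).
rewrite -(int_B P (BT mu _ (hk t)) (BT mu _ (hsel t))).
apply: le_integral => //; [exact/BM_int/BM_B|exact/BM_int/BM_B/BT/hsel/BT/hk|].
move=> x _; rewrite lee_fin indicT /= !mulr1 indicE.
have [a [ha aS hmin]] := sel_spec sg (hkS t x).
have hmu c : c \in S t x -> mu a <= mu c.
  by move=> hc; have := hs _ _ (hmin c hc); rewrite !permKV.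
rewrite /sel ha /=.
case: (boolP (x \in At t)) => hx.
  move: (set_mem hx) => /= /andP[/eqP ki jS].
  by rewrite ki !mulr1 lerD2l lerN2 hmu.
by rewrite !mulr0 subr0 subr_ge0 hmu.
Qed.


Lemma main_thm :
  (\big[maxe/-oo]_(ij : 'I_K * 'I_K)
      \int[P]_x (int_regret l k S T ij.1 ij.2 x)%:E
   <= \big[maxe/-oo]_(sigma : {perm 'I_K})
      \int[P]_x (ordering_regret l k S T sigma x)%:E)%E.
Proof.
elim/big_ind: _ => //.
- exact: leNye.
- by move=> x y hx hy; rewrite ge_max hx hy.
move=> [i j] _ /=.
have [sg hsg] := sorted_perm mu i.
apply: le_trans (int_le_ord i j hsg) _.
by rewrite (bigD1 sg) //= le_max lexx.
Qed.

End main.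

Theorem mainTheorem4 (R : realType) (d : measure_display) (Om : measurableType d)
  (P : probability Om R) (K : nat) (T : nat) (mu : 'I_K -> R)
  (l : nat -> 'I_K -> Om -> R) (k : nat -> Om -> 'I_K)
  (S : nat -> Om -> {set 'I_K}) (G : nat -> set (set Om))
  (* losses in [0,1], measurable, with mean mu *)
  (hl01 : forall t a x, 0 <= l t a x <= 1)
  (hlmeas : forall t a, measurable_fun setT (l t a))
  (hmean : forall t a, (\int[P]_x (l t a x)%:E = (mu a)%:E)%E)
  (* identically distributed loss vectors *)
  (hident : forall t (B : 'I_K -> set R), (forall a, measurable (B a)) ->
     P (rect_event l t B) = P (rect_event l 0 B))
  (* G t : sub-sigma-algebra of everything determined before l t (k t) is
     observed at round t *)
  (hGsig : forall t, sigma_algebra setT (G t))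
  (hGsub : forall t, G t `<=` measurable)
  (hGk : forall t s i, (s <= t)%N -> G t (k s @^-1` [set i]))
  (hGS : forall t s (A : {set 'I_K}), (s <= t)%N -> G t (S s @^-1` [set A]))
  (hGl : forall t s a (B : set R), (s < t)%N -> measurable B ->
     G t (l s a @^-1` B))
  (* l t is independent of G t *)
  (hind : forall t (A : set Om) (B : 'I_K -> set R), G t A ->
     (forall a, measurable (B a)) ->
     P (A `&` rect_event l t B) = (P A * P (rect_event l t B))%E)
  (* the learner picks an available arm *)
  (hkS : forall t x, k t x \in S t x) :
  (\big[maxe/-oo]_(ij : 'I_K * 'I_K)
      \int[P]_x (int_regret l k S T ij.1 ij.2 x)%:E
   <= \big[maxe/-oo]_(sigma : {perm 'I_K})
      \int[P]_x (ordering_regret l k S T sigma x)%:E)%E.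
Proof.
exact: (@main_thm R d Om P K T mu l k S G hl01 hlmeas hmean hGsig hGsub hGk hGS hind hkS).
Qed.
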